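(* For every real $u<1$ with $u\neq0$, $$\sum_{k=0}^\infty\frac{u^k}{2k+1}\left(\left(1-i\sqrt{1-u}\right)^{-2k-1}+\left(1+i\sqrt{1-u}\right)^{-2k-1}\right)=\frac{\operatorname{arctanh}\sqrt u}{\sqrt u}.$$
   Context: Here $i=\sqrt{-1}$ and $\sqrt{1-u}>0$. The right-hand side is the even function $\frac{\operatorname{arctanh}\sqrt u}{\sqrt u}=\sum_{k\ge0}\frac{u^k}{2k+1}$; for $0<u<1$ it is the real value with $\sqrt u>0$, and for $u<0$ it equals $\frac{\arctan\sqrt{|u|}}{\sqrt{|u|}}$. *)

(* Defs.v *)
From Stdlib Require Import Reals.
From Coquelicot Require Import Coquelicot.
Open Scope R_scope.

Definition arctanh (x : R) : R := / 2 * ln ((1 + x) / (1 - x)).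

(* The right-hand side  arctanh(sqrt u)/sqrt u  as specified in the paper:
   for 0 < u < 1 the real value with sqrt u > 0; for u < 0 it equals
   arctan(sqrt|u|)/sqrt|u|. (u = 0 is excluded in the theorem.) *)
Definition rhs (u : R) : R :=
  if Rlt_dec 0 u then arctanh (sqrt u) / sqrt u
  else atan (sqrt (- u)) / sqrt (- u).

Definition term (u : R) (k : nat) : C :=
  let s := sqrt (1 - u) in
  (RtoC (u ^ k / INR (2 * k + 1)) *
   (Cinv (Cpow (RtoC 1 - Ci * RtoC s) (2 * k + 1))
    + Cinv (Cpow (RtoC 1 + Ci * RtoC s) (2 * k + 1))))%C.

(* Main.v *)
Require Import Defs.
From Stdlib Require Import Reals Lra Psatz.
From Coquelicot Require Import Coquelicot.
Open Scope R_scope.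

Lemma Re_plus (a b : C) : Re (a + b)%C = Re a + Re b.
Proof. destruct a, b; reflexivity. Qed.

Lemma Rabs_Re_le (z : C) : Rabs (Re z) <= Cmod z.
Proof.
  destruct z as [a b]. unfold Cmod, Re; simpl.
  rewrite <- sqrt_Rsqr_abs. apply sqrt_le_1_alt. unfold Rsqr. nra.
Qed.

Lemma Cinv_pow (a : C) (n : nat) : a <> 0%C -> Cinv (Cpow a n) = Cpow (Cinv a) n.
Proof.
  intros Ha. induction n as [|n IH]; simpl.
  - apply injective_projections; simpl; field_simplify; try field; lra.
  - rewrite <- IH. field. split; auto.
    apply Cmod_gt_0. rewrite Cmod_pow. apply pow_lt. apply Cmod_gt_0. auto.
Qed.

Lemma geom_partial (A z : C) (N : nat) : z <> 1%C ->
  sum_n (fun k => Re (A * Cpow z k)%C) N = Re (A * (1 - Cpow z (S N)) / (1 - z))%C.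
Proof.
  intros Hz. assert (Hz' : (1 - z)%C <> 0%C).
  { intro H. apply Hz. replace z with (1 - (1 - z))%C by ring. rewrite H. ring. }
  induction N as [|N IH].
  - rewrite sum_O. f_equal. simpl. field. auto.
  - rewrite sum_Sn, IH. change (plus ?a ?b) with (a + b). rewrite <- Re_plus. f_equal.
    simpl. field. auto.
Qed.

Lemma geom_series (A z : C) : Cmod z < 1 ->
  is_series (fun k => Re (A * Cpow z k)%C) (Re (A / (1 - z))%C).
Proof.
  intros Hz.
  assert (Hz1 : z <> 1%C). { intro H; subst. rewrite Cmod_1 in Hz. lra. }
  assert (Hz' : (1 - z)%C <> 0%C).
  { intro H. apply Hz1. replace z with (1 - (1 - z))%C by ring. rewrite H. ring. }
  enough (H: is_lim_seq (sum_n (fun k => Re (A * Cpow z k)%C)) (Re (A/(1-z))%C)) by exact H.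
  apply (is_lim_seq_ext (fun N => Re (A / (1 - z))%C - Re (A / (1 - z) * Cpow z (S N))%C)).
  { intros N. rewrite geom_partial by auto. unfold Rminus.
    replace (- Re (A / (1 - z) * Cpow z (S N))%C) with (Re (- (A / (1 - z) * Cpow z (S N)))%C)
      by (destruct (A / (1 - z) * Cpow z (S N))%C; reflexivity).
    rewrite <- Re_plus. f_equal. field. auto. }
  set (L := Re (A / (1 - z))%C).
  enough (H0 : is_lim_seq (fun N => L - Re (A / (1 - z) * Cpow z (S N))%C) (L - 0)).
  { rewrite Rminus_0_r in H0. exact H0. }
  apply is_lim_seq_minus'. apply is_lim_seq_const.
  assert (HG : is_lim_seq (fun N => Cmod (A / (1 - z))%C * Cmod z ^ S N) 0).
  { replace (Finite 0) with (Rbar_mult (Cmod (A / (1 - z))%C) (Finite 0)) by (simpl; f_equal; ring).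
    apply is_lim_seq_scal_l.
    apply (is_lim_seq_incr_1 (fun n => Cmod z ^ n)). apply is_lim_seq_geom.
    rewrite Rabs_pos_eq; auto using Cmod_ge_0. }
  apply (is_lim_seq_le_le (fun N => - (Cmod (A / (1 - z))%C * Cmod z ^ S N)) _
          (fun N => Cmod (A / (1 - z))%C * Cmod z ^ S N)).
  - intros N. pose proof (Rabs_Re_le (A / (1 - z) * Cpow z (S N))%C) as H.
    rewrite Cmod_mult, Cmod_pow in H. apply Rabs_le_between in H. exact H.
  - replace (Finite 0) with (Rbar_opp (Finite 0)) by (simpl; f_equal; ring).
    apply (is_lim_seq_opp (fun N => Cmod (A / (1 - z))%C * Cmod z ^ S N) (Finite 0)). exact HG.
  - exact HG.
Qed.
Lemma re_rat (s y : R) : let u := 1 - s*s in let m := 2 - u in let W : C := (/ m, s / m) in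
  (m*m - u*u) + u*u*(y-1)*(y-1) > 0 ->
  Re (RtoC 2 * W / (1 - RtoC (u*y) * (W * W)))%C = 2*(m - u*y)/(m*m - 2*u*u*y + u*u*y*y).
Proof.
  intros u m W HD. unfold W, m, u in *.
  unfold Cdiv, Cinv, Cminus, Cmult, Cplus, Copp, RtoC, Re; simpl.
  assert (Hs : 0 <= s*s) by nra.
  field_simplify_eq; [ring|]. split; [nra|split; [lra|]].
  match goal with |- ?e <> 0 => replace e with ((2 - (1 - s*s))^2 * ((2 - (1 - s * s)) * (2 - (1 - s * s)) - (1 - s * s) * (1 - s * s) +
    (1 - s * s) * (1 - s * s) * (y - 1) * (y - 1))) by ring end.
  apply Rgt_not_eq. apply Rmult_lt_0_compat; [|lra]. apply pow_lt. lra.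
Qed.

Definition mm (u : R) := 2 - u.
Definition ss (u : R) := sqrt (1 - u).
Definition WW (u : R) : C := (/ mm u, ss u / mm u).
Definition bb (u : R) (k : nat) := u ^ k / INR (2 * k + 1) * (2 * Re (Cpow (WW u) (2 * k + 1))).
Definition cc (u : R) (k : nat) := u ^ k * (2 * Re (Cpow (WW u) (2 * k + 1))).
Definition rr (u : R) := (mm u + Rabs u) / (2 * Rabs u).
Definition rat (u y : R) := 2 * (mm u - u * y) / (mm u * mm u - 2 * u * u * y + u * u * y * y).

Section Main.
Variable u : R.
Hypothesis hu1 : u < 1.
Hypothesis hu0 : u <> 0.

Lemma ss2 : ss u * ss u = 1 - u.
Proof. unfold ss. apply sqrt_sqrt. lra. Qed.
Lemma mm_pos : 0 < mm u. Proof. unfold mm; lra. Qed.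
Lemma absu_lt : Rabs u < mm u.
Proof. unfold mm. destruct (Rle_dec 0 u); [rewrite Rabs_pos_eq|rewrite Rabs_left]; lra. Qed.
Lemma absu_pos : 0 < Rabs u. Proof. apply Rabs_pos_lt; auto. Qed.

Lemma rr_gt1 : 1 < rr u.
Proof.
  pose proof absu_lt; pose proof absu_pos. unfold rr.
  apply Rmult_lt_reg_r with (2 * Rabs u); [lra|]. field_simplify; lra.
Qed.

Lemma CmodW2 : Cmod (WW u) ^ 2 = / mm u.
Proof.
  pose proof ss2; pose proof mm_pos. unfold Cmod.
  rewrite pow2_sqrt.
  - unfold WW; simpl. unfold mm in *. field_simplify; try lra.
    replace (ss u ^ 2) with (1 - u) by (simpl; lra).
    replace (u ^ 2 - 4 * u + 4) with ((2 - u) * (2 - u)) by ring. field. lra.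
  - apply Rplus_le_le_0_compat; apply pow2_ge_0.
Qed.

Lemma powW (y : R) (k : nat) :
  (RtoC ((u * y) ^ k) * Cpow (WW u) (2 * k + 1))%C = (WW u * Cpow (RtoC (u * y) * (WW u * WW u)) k)%C.
Proof.
  induction k as [|k IH].
  - simpl. apply injective_projections; simpl; ring.
  - replace (2 * S k + 1)%nat with (S (S (2 * k + 1))) by lia.
    change ((u*y)^S k) with (u*y*(u*y)^k).
    change (Cpow (WW u) (S (S (2 * k + 1)))) with (WW u * (WW u * Cpow (WW u) (2 * k + 1)))%C.
    change (Cpow (RtoC (u * y) * (WW u * WW u)) (S k)) with (RtoC (u * y) * (WW u * WW u) * Cpow (RtoC (u * y) * (WW u * WW u)) k)%C.
    rewrite RtoC_mult.
    replace (RtoC (u * y) * RtoC ((u * y) ^ k) * (WW u * (WW u * Cpow (WW u) (2 * k + 1))))%C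
      with (RtoC (u * y) * (WW u * WW u) * (RtoC ((u * y) ^ k) * Cpow (WW u) (2 * k + 1)))%C by ring.
    rewrite IH. ring.
Qed.

Lemma cc_geom (y : R) : Rabs y < rr u -> is_series (fun k => cc u k * y ^ k) (rat u y).
Proof.
  intros Hy. pose proof absu_lt; pose proof absu_pos; pose proof mm_pos.
  set (z := (RtoC (u * y) * (WW u * WW u))%C).
  assert (Hz : Cmod z < 1).
  { unfold z. rewrite Cmod_mult, Cmod_mult, Cmod_R, Rabs_mult.
    replace (Cmod (WW u) * Cmod (WW u)) with (/ mm u) by (rewrite <- CmodW2; simpl; ring).
    apply Rle_lt_trans with (Rabs u * rr u * / mm u).
    - apply Rmult_le_compat_r. left; apply Rinv_0_lt_compat; lra.
      apply Rmult_le_compat_l; [lra|]. lra.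
    - unfold rr. field_simplify; try lra. apply Rmult_lt_reg_r with (2 * mm u); [lra|].
      field_simplify; lra. }
  pose proof (geom_series (RtoC 2 * WW u) z Hz) as G.
  assert (E : Re (RtoC 2 * WW u / (1 - z))%C = rat u y).
  { unfold z, rat, WW, mm, ss.
    pose proof (re_rat (sqrt (1 - u)) y) as R0. cbv zeta in R0.
    replace (1 - sqrt (1 - u) * sqrt (1 - u)) with u in R0 by (rewrite sqrt_sqrt; lra).
    apply R0. pose proof (pow2_ge_0 (u * (y - 1))). simpl in *. nra. }
  rewrite <- E. eapply is_series_ext; [|exact G].
  intros k. unfold cc, z.
  rewrite <- Cmult_assoc, <- powW, Cmult_assoc, <- RtoC_mult, re_scal_l.
  rewrite Rpow_mult_distr. match goal with |- ?a = ?b => change (@eq R a b) end. ring.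
Qed.

Lemma bb_bound (n : nat) : Rabs (bb u n * rr u ^ n) <= 2 * Cmod (WW u) * (Rabs u * rr u / mm u) ^ n.
Proof.
  pose proof mm_pos; pose proof absu_pos; pose proof rr_gt1.
  assert (HI : 1 <= INR (2 * n + 1)).
  { replace 1 with (INR 1) by reflexivity. apply le_INR. lia. }
  assert (A1 : Rabs (u ^ n / INR (2 * n + 1)) <= Rabs u ^ n).
  { unfold Rdiv. rewrite Rabs_mult, <- RPow_abs, Rabs_inv, (Rabs_pos_eq (INR _)) by lra.
    rewrite <- (Rmult_1_r (Rabs u ^ n)) at 2. apply Rmult_le_compat_l.
    apply pow_le, Rabs_pos. rewrite <- Rinv_1. apply Rinv_le_contravar; lra. }
  assert (A2 : Rabs (2 * Re (Cpow (WW u) (2 * n + 1))) <= 2 * (Cmod (WW u) * (/ mm u) ^ n)).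
  { rewrite Rabs_mult, (Rabs_pos_eq 2) by lra. apply Rmult_le_compat_l; [lra|].
    eapply Rle_trans; [apply Rabs_Re_le|]. rewrite Cmod_pow.
    rewrite pow_add, pow_mult, CmodW2. simpl pow at 3. lra. }
  unfold bb. rewrite Rabs_mult, Rabs_mult, (Rabs_pos_eq (rr u ^ n)) by (apply pow_le; lra).
  apply Rle_trans with (Rabs u ^ n * (2 * (Cmod (WW u) * (/ mm u) ^ n)) * rr u ^ n).
  - apply Rmult_le_compat_r; [apply pow_le; lra|].
    apply Rmult_le_compat; auto using Rabs_pos.
  - unfold Rdiv. rewrite !Rpow_mult_distr. right. ring.
Qed.

Lemma radius_ge : Rbar_le (rr u) (CV_radius (bb u)).
Proof.
  pose proof mm_pos; pose proof absu_pos; pose proof absu_lt; pose proof rr_gt1.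
  apply (proj1 (Lub_Rbar_correct (CV_disk (bb u)))).
  unfold CV_disk.
  apply (@ex_series_le R_AbsRing R_CompleteNormedModule _ (fun n => 2 * Cmod (WW u) * (Rabs u * rr u / mm u) ^ n)).
  - intros n. rewrite Rabs_Rabsolu. apply bb_bound.
  - eexists. apply (is_series_ext (fun n => scal (2 * Cmod (WW u)) ((Rabs u * rr u / mm u) ^ n))); [reflexivity|].
    apply (@is_series_scal_l R_AbsRing R_NormedModule). apply is_series_geom.
    rewrite Rabs_pos_eq.
    + unfold rr. apply Rmult_lt_reg_r with (2 * mm u); [lra|]. field_simplify; lra.
    + apply Rmult_le_pos; [apply Rmult_le_pos; lra|]. left; apply Rinv_0_lt_compat; lra.
Qed.

Lemma inside (y : R) : Rabs y < rr u -> Rbar_lt (Rabs y) (CV_radius (bb u)).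
Proof.
  intros Hy. eapply Rbar_lt_le_trans; [|apply radius_ge]. exact Hy.
Qed.

Lemma K_series (y : R) : Rabs y < rr u -> is_series (fun k => bb u k * y ^ k) (PSeries (bb u) y).
Proof.
  intros Hy. apply is_pseries_R. apply PSeries_correct. apply CV_radius_inside. apply inside; auto.
Qed.

Lemma K'_series (y : R) : Rabs y < rr u ->
  is_series (fun k => PS_derive (bb u) k * y ^ k) (PSeries (PS_derive (bb u)) y).
Proof.
  intros Hy. apply is_pseries_R. apply PSeries_correct. apply CV_radius_inside.
  rewrite CV_radius_derive. apply inside; auto.
Qed.

Lemma D_eq (y : R) : Rabs y < rr u ->
  PSeries (bb u) y + 2 * y * PSeries (PS_derive (bb u)) y = rat u y.
Proof.
  intros Hy.
  set (L1 := PSeries (bb u) y). set (L2 := PSeries (PS_derive (bb u)) y).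
  assert (H2 : is_series (fun n => 2 * INR n * bb u n * y ^ n) (2 * y * L2)).
  { apply (@is_series_decr_1 R_AbsRing R_NormedModule).
    assert (E0 : plus (2 * y * L2) (opp (2 * INR 0 * bb u 0 * y ^ 0)) = 2 * y * L2).
    { change (2 * y * L2 + - (2 * INR 0 * bb u 0 * y ^ 0) = 2 * y * L2). simpl. ring. }
    cbv beta. match goal with |- is_series ?f ?l => replace l with (2 * y * L2) by (symmetry; exact E0) end.
    apply (is_series_ext (fun n => scal (2 * y) (PS_derive (bb u) n * y ^ n))).
    - intros n. change (2 * y * (INR (S n) * bb u (S n) * y ^ n) = 2 * INR (S n) * bb u (S n) * (y * y ^ n)). ring.
    - apply (@is_series_scal_l R_AbsRing R_NormedModule). apply K'_series; auto. }
  pose proof (@is_series_plus R_AbsRing R_NormedModule _ _ _ _ H2 (K_series y Hy)) as H3.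
  assert (H4 : is_series (fun k => cc u k * y ^ k) (2 * y * L2 + L1)).
  { eapply is_series_ext; [|exact H3]. intros n. unfold plus; simpl. unfold bb, cc.
    assert (HI : INR (2 * n + 1) = 2 * INR n + 1) by (rewrite plus_INR, mult_INR; simpl; ring).
    rewrite HI. field. pose proof (pos_INR n). lra. }
  pose proof (is_series_unique _ _ H4) as E1.
  pose proof (is_series_unique _ _ (cc_geom y Hy)) as E2.
  rewrite E1 in E2. lra.
Qed.

Lemma f_deriv (x : R) : x * x < rr u ->
  is_derive (fun x => x * PSeries (bb u) (x * x)) x (rat u (x * x)).
Proof.
  intros Hx.
  assert (Hy : Rabs (x * x) < rr u) by (rewrite Rabs_pos_eq; nra).
  assert (Hsq : is_derive (fun x : R => x * x) x (2 * x)) by (auto_derive; [auto|ring]).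
  pose proof (is_derive_comp (PSeries (bb u)) (fun x => x * x) x _ _ (is_derive_PSeries _ _ (inside _ Hy)) Hsq) as Hc.
  pose proof (is_derive_mult (fun x : R => x) _ x _ _ (is_derive_id x) Hc) as Hm.
  rewrite <- (D_eq _ Hy).
  specialize (Hm (fun a b => Rmult_comm a b)).
  match type of Hm with is_derive _ _ ?d =>
    replace (PSeries (bb u) (x * x) + 2 * (x * x) * PSeries (PS_derive (bb u)) (x * x)) with d; [exact Hm|] end.
  change (1 * PSeries (bb u) (x * x) + x * (2 * x * PSeries (PS_derive (bb u)) (x * x)) =
          PSeries (bb u) (x * x) + 2 * (x * x) * PSeries (PS_derive (bb u)) (x * x)). ring.
Qed.


Lemma Cinv_a_nz (s : R) : (RtoC 1 - Ci * RtoC s)%C <> 0%C.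
Proof. intro H. apply (f_equal fst) in H. simpl in H. lra. Qed.
Lemma Cinv_b_nz (s : R) : (RtoC 1 + Ci * RtoC s)%C <> 0%C.
Proof. intro H. apply (f_equal fst) in H. simpl in H. lra. Qed.

Lemma Wa : Cinv (RtoC 1 - Ci * RtoC (ss u))%C = WW u.
Proof.
  pose proof ss2. unfold WW, mm.
  unfold Cinv, Cminus, Cmult, Cplus, Copp, RtoC, Ci; simpl.
  f_equal; match goal with |- ?a / ?d = _ => replace d with (2-u) by nra end; field; lra.
Qed.
Lemma Wb : Cinv (RtoC 1 + Ci * RtoC (ss u))%C = Cconj (WW u).
Proof.
  pose proof ss2. unfold WW, mm.
  unfold Cconj, Cinv, Cminus, Cmult, Cplus, Copp, RtoC, Ci; simpl.
  f_equal; match goal with |- ?a / ?d = _ => replace d with (2-u) by nra end; field; lra.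
Qed.

Lemma term_eq (k : nat) : term u k = RtoC (bb u k).
Proof.
  unfold term. cbv zeta. fold (ss u).
  rewrite !Cinv_pow by (apply Cinv_a_nz || apply Cinv_b_nz).
  rewrite Wa, Wb, <- Cpow_conj.
  unfold bb. rewrite RtoC_mult. f_equal.
  destruct (Cpow (WW u) (2 * k + 1)) as [a b]. unfold Cconj, Cplus, RtoC, Re; simpl.
  f_equal; ring.
Qed.

End Main.

Lemma sum_n_RtoC (a : nat -> R) (n : nat) : sum_n (fun k => RtoC (a k)) n = RtoC (sum_n a n).
Proof.
  induction n as [|n IH].
  - rewrite !sum_O. reflexivity.
  - rewrite !sum_Sn, IH. change (plus (RtoC (sum_n a n)) (RtoC (a (S n))) = RtoC (sum_n a n + a (S n))).
    rewrite RtoC_plus. reflexivity.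
Qed.

Lemma is_series_RtoC (a : nat -> R) (l : R) : is_series a l -> is_series (fun k => RtoC (a k)) (RtoC l).
Proof.
  intros H. unfold is_series in *.
  apply (filterlim_ext (fun n => RtoC (sum_n a n))).
  { intros n. rewrite sum_n_RtoC. reflexivity. }
  apply (filterlim_comp _ _ _ (sum_n a) RtoC eventually (locally l)); [exact H|].
  apply filterlim_locally. intros eps. exists eps. intros y Hy.
  split; [exact Hy|]. apply ball_center.
Qed.
Lemma gp_deriv (t x : R) : 0 < t -> t * t < 1 ->
  is_derive (fun x => (ln (2 - t*t + t*t*x*x + 2*t*x) - ln (2 - t*t + t*t*x*x - 2*t*x)) / (2*t)) x
    (rat (t*t) (x*x)).
Proof.
  intros Ht Ht1.
  assert (HP : 0 < 2 - t*t + t*t*x*x + 2*t*x) by (pose proof (pow2_ge_0 (t*x+1)); simpl in *; nra).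
  assert (HQ : 0 < 2 - t*t + t*t*x*x - 2*t*x) by (pose proof (pow2_ge_0 (t*x-1)); simpl in *; nra).
  auto_derive; [lra|]. unfold rat, mm.
  assert (HD : 0 < (2 - t*t + t*t*x*x + 2*t*x) * (2 - t*t + t*t*x*x - 2*t*x)) by nra.
  field_simplify_eq; [ring| ]. 
  repeat split; try lra.
Qed.

Lemma gn_deriv (t x : R) : 0 < t -> t * t * x * x < 2 + t * t ->
  is_derive (fun x => atan (2*t*x / (2 + t*t - t*t*x*x)) / t) x (rat (-(t*t)) (x*x)).
Proof.
  intros Ht Hx.
  assert (HA : 0 < 2 + t*t - t*t*x*x) by lra.
  auto_derive; [lra|]. unfold rat, mm.
  assert (HB : 0 < (2 + t*t - t*t*x*x) * (2 + t*t - t*t*x*x) + 4*t*t*x*x).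
  { pose proof (pow2_ge_0 (t*x)). simpl in *. nra. }
  replace ((2 - - (t * t)) * (2 - - (t * t)) - 2 * - (t * t) * - (t * t) * (x * x) +
   - (t * t) * - (t * t) * (x * x) * (x * x)) with
   ((2 + t*t - t*t*x*x) * (2 + t*t - t*t*x*x) + 4*t*t*x*x) by ring.
  field. split; [lra|]. split; [lra|].
  replace ((2 + t * t + - (t * t * x * x)) * (2 + t * t + - (t * t * x * x)) + 2 * t * x * (2 * t * x))
    with ((2 + t*t - t*t*x*x) * (2 + t*t - t*t*x*x) + 4*t*t*x*x) by ring. lra.
Qed.

Theorem lemma5p1 (u : R) (hu1 : u < 1) (hu0 : u <> 0) :
  is_series (term u) (RtoC (rhs u)).
Proof.
  assert (HK : is_series (bb u) (PSeries (bb u) 1)).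
  { eapply is_series_ext; [|apply (K_series u hu1 hu0 1)].
    - intros n. simpl. rewrite pow1. ring.
    - rewrite Rabs_R1. apply rr_gt1; auto. }
  eapply is_series_ext; [intros k; symmetry; apply term_eq; auto|].
  apply is_series_RtoC.
  replace (rhs u) with (PSeries (bb u) 1); [exact HK|].
  set (F := fun x => x * PSeries (bb u) (x * x)).
  assert (HF : forall x, 0 <= x <= 1 -> is_derive F x (rat u (x * x))).
  { intros x Hx. apply f_deriv; auto. pose proof (rr_gt1 u hu1 hu0). nra. }
  assert (F1 : F 1 = PSeries (bb u) 1) by (unfold F; rewrite !Rmult_1_l; reflexivity).
  assert (F0 : F 0 = 0) by (unfold F; ring).
  rewrite <- F1.
  unfold rhs. destruct (Rlt_dec 0 u) as [Hpos|Hneg].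
  - set (t := sqrt u).
    assert (Ht : 0 < t) by (apply sqrt_lt_R0; auto).
    assert (Htt : t * t = u) by (apply sqrt_sqrt; lra).
    assert (Ht1 : t < 1) by nra.
    set (G := fun x => (ln (2 - t*t + t*t*x*x + 2*t*x) - ln (2 - t*t + t*t*x*x - 2*t*x)) / (2*t)).
    assert (HG : forall x, is_derive G x (rat u (x * x))).
    { intros x. pose proof (gp_deriv t x Ht ltac:(lra)) as H. replace (rat (t * t) (x * x)) with (rat u (x * x)) in H by (rewrite Htt; reflexivity). exact H. }
    assert (E : F 0 - G 0 = F 1 - G 1).
    { apply (eq_is_derive (fun x => F x - G x)); [|lra].
      intros x Hx. match goal with |- is_derive _ _ ?z => replace z with (minus (rat u (x * x)) (rat u (x * x))) by (change (rat u (x * x) - rat u (x * x) = 0); ring) end.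
      exact (is_derive_minus F G x _ _ (HF x Hx) (HG x)). }
    assert (G0 : G 0 = 0).
    { unfold G. replace (2 - t * t + t * t * 0 * 0 + 2 * t * 0) with (2 - t * t) by ring.
      replace (2 - t * t + t * t * 0 * 0 - 2 * t * 0) with (2 - t * t) by ring.
      unfold Rminus at 1. rewrite Rplus_opp_r. field. lra. }
    assert (G1 : G 1 = arctanh t / t).
    { unfold G, arctanh.
      replace (2 - t * t + t * t * 1 * 1 + 2 * t * 1) with (2 * (1 + t)) by ring.
      replace (2 - t * t + t * t * 1 * 1 - 2 * t * 1) with (2 * (1 - t)) by ring.
      rewrite ln_div, !ln_mult by lra. field. lra. }
    lra.
  - assert (Hu : u < 0) by lra.
    set (t := sqrt (- u)).
    assert (Ht : 0 < t) by (apply sqrt_lt_R0; lra).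
    assert (Htt : t * t = - u) by (apply sqrt_sqrt; lra).
    set (G := fun x => atan (2*t*x / (2 + t*t - t*t*x*x)) / t).
    assert (HG : forall x, 0 <= x <= 1 -> is_derive G x (rat u (x * x))).
    { intros x Hx. assert (Hxx : x * x <= 1) by nra.
      assert (Hc : t * t * x * x < 2 + t * t).
      { replace (t * t * x * x) with ((t * t) * (x * x)) by ring.
        pose proof (Rmult_le_compat_l (t * t) _ _ ltac:(nra) Hxx). lra. }
      pose proof (gn_deriv t x Ht Hc) as H.
      replace (- (t * t)) with u in H by lra. exact H. }
    assert (E : F 0 - G 0 = F 1 - G 1).
    { apply (eq_is_derive (fun x => F x - G x)); [|lra].
      intros x Hx. match goal with |- is_derive _ _ ?z => replace z with (minus (rat u (x * x)) (rat u (x * x))) by (change (rat u (x * x) - rat u (x * x) = 0); ring) end.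
      exact (is_derive_minus F G x _ _ (HF x Hx) (HG x Hx)). }
    assert (G0 : G 0 = 0).
    { unfold G. replace (2 * t * 0 / (2 + t * t - t * t * 0 * 0)) with 0 by (field; nra).
      rewrite atan_0. field. lra. }
    assert (G1 : G 1 = atan t / t).
    { unfold G. replace (2 * t * 1 / (2 + t * t - t * t * 1 * 1)) with t by (field; nra). reflexivity. }
    lra.
Qed.
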